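(* Let $X$ be any $E\mathcal M$-simplicial set. Then the map $\Phi\colon E\mathrm{Inj}(2\times\omega,\omega)\times_{E\mathcal M^2}(X\times * )\to X\times *\cong X$ has image exactly $X^\mu$ and is an isomorphism $E\mathrm{Inj}(2\times\omega,\omega)\times_{E\mathcal M^2}(X\times * )\cong X^\mu$.
   Context: $\omega=\{1,2,\dots\}$, $\mathcal M$ the monoid of injections $\omega\to\omega$, $\mathcal M_A$ those fixing $A\subset\omega$ pointwise; $A$ co-infinite if $\omega\setminus A$ is infinite. $E\mathcal M$ is the simplicial monoid with $(E\mathcal M)_n=\mathcal M^{1+n}$, pointwise multiplication, structure maps by precomposition. $x\in X_n$ is $k$-supported on $A$ if $i_k(u).x=x$ for all $u\in\mathcal M_A$ ($i_k$ inclusion of the $(1+k)$-th factor). $X^\mu\subset X$ is the sub-object of simplices that are for every $k$ $k$-supported on some co-infinite set. $*$ is the terminal $E\mathcal M$-simplicial set. $E\mathrm{Inj}(2\times\omega,\omega)$ has $m$-simplices tuples $(f_0,\dots,f_m)$ of injections $2\times\omega\to\omega$ ($2=\{1,2\}$). $E\mathrm{Inj}(2\times\omega,\omega)\times_{E\mathcal M^2}(X\times Y)$ is the quotient of $E\mathrm{Inj}(2\times\omega,\omega)\times X\times Y$ by the equivalence relation generated on $m$-simplices by $(f_0,\dots,f_m;u.x,v.y)\sim(f_0(u^{(0)}\amalg v^{(0)}),\dots,f_m(u^{(m)}\amalg v^{(m)});x,y)$ for $u=(u^{(i)}),v=(v^{(i)})\in(E\mathcal M)_m$, with $E\mathcal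 M$ acting by postcomposition; $\Phi[f_0,\dots,f_m;x,y]=((f_0\iota_1,\dots,f_m\iota_1).x,(f_0\iota_2,\dots,f_m\iota_2).y)$ where $\iota_j(t)=(j,t)$. *)

(* Defs.v *)
From Stdlib Require Import Relations.
From mathcomp Require Import all_boot.
Set Implicit Arguments. Unset Strict Implicit. Unset Printing Implicit Defensive.

(* omega = {1,2,...} is modelled by nat (relabelling t |-> t-1). *)

Record Minj := MInj { mfun :> nat -> nat; minj : injective mfun }.

Definition Mid : Minj := @MInj id (fun x y (h : id x = id y) => h).

Lemma Mcomp_inj (u v : Minj) : injective (fun t => u (v t)).
Proof. move=> x y h; exact: (@minj v x y (@minj u _ _ h)). Qed.

Definition Mcomp (u v : Minj) : Minj := MInj (@Mcomp_inj u v).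

Record Dmap (m n : nat) := DMap {
  dfun :> 'I_m.+1 -> 'I_n.+1;
  dmono : {homo dfun : i j / i <= j} }.

Definition Did (n : nat) : Dmap n n := @DMap n n id (fun i j h => h).

Lemma Dcomp_mono m n p (b : Dmap n p) (a : Dmap m n) :
  {homo (fun i => b (a i)) : i j / i <= j}.
Proof. by move=> i j h; apply: dmono; apply: dmono. Qed.

Definition Dcomp m n p (b : Dmap n p) (a : Dmap m n) : Dmap m p :=
  DMap (@Dcomp_mono m n p b a).

(** E M-simplicial sets: simplicial sets X with an action of
    (EM)_n = M^{1+n} (here 'I_n.+1 -> Minj, pointwise multiplication)
    on X_n, compatible with the simplicial structure
    (structure maps of EM are precomposition). *)
Record EMsSet := EMSSet {
  sx :> nat -> Type;
  sop : forall m n, Dmap m n -> sx n -> sx m;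
  sact : forall n, ('I_n.+1 -> Minj) -> sx n -> sx n;
  sop_id : forall n (x : sx n), sop (Did n) x = x;
  sop_comp : forall m n p (a : Dmap m n) (b : Dmap n p) (x : sx p),
      sop (Dcomp b a) x = sop a (sop b x);
  sact_id : forall n (x : sx n), sact (fun _ => Mid) x = x;
  sact_comp : forall n (u v : 'I_n.+1 -> Minj) (x : sx n),
      sact (fun i => Mcomp (u i) (v i)) x = sact u (sact v x);
  sop_act : forall m n (a : Dmap m n) (u : 'I_n.+1 -> Minj) (x : sx n),
      sop a (sact u x) = sact (fun i => u (a i)) (sop a x) }.

Definition Term : EMsSet :=
  @EMSSet (fun _ => unit) (fun _ _ _ _ => tt) (fun _ _ _ => tt)
    (fun _ x => match x with tt => erefl end)
    (fun _ _ _ _ _ _ => erefl)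
    (fun _ x => match x with tt => erefl end)
    (fun _ _ _ _ => erefl)
    (fun _ _ _ _ _ => erefl).

Definition ik (n : nat) (k : 'I_n.+1) (u : Minj) : 'I_n.+1 -> Minj :=
  fun i => if i == k then u else Mid.

Definition fixes (A : nat -> Prop) (u : Minj) : Prop := forall a, A a -> u a = a.

Definition coinfinite (A : nat -> Prop) : Prop :=
  forall N : nat, exists t, N <= t /\ ~ A t.

Definition k_supported (X : EMsSet) (n : nat) (k : 'I_n.+1)
  (A : nat -> Prop) (x : X n) : Prop :=
  forall u : Minj, fixes A u -> sact (ik k u) x = x.

Definition in_mu (X : EMsSet) (n : nat) (x : X n) : Prop :=
  forall k : 'I_n.+1, exists A : nat -> Prop, coinfinite A /\ k_supported k A x.

(** Injections 2 x omega -> omega, with 2 = {1,2} modelled by 'I_2. *)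
Record Inj2 := IInj2 { ifun :> 'I_2 * nat -> nat; iinj : injective ifun }.

Definition two1 : 'I_2 := @Ordinal 2 0 erefl.
Definition two2 : 'I_2 := @Ordinal 2 1 erefl.

Lemma restr_inj (f : Inj2) (j : 'I_2) : injective (fun t => f (j, t)).
Proof. by move=> x y /iinj [] . Qed.
Definition restr (f : Inj2) (j : 'I_2) : Minj := MInj (@restr_inj f j).

Definition coprod_fun (u v : Minj) (p : 'I_2 * nat) : 'I_2 * nat :=
  (p.1, if p.1 == two1 then u p.2 else v p.2).
Lemma pre_inj (f : Inj2) (u v : Minj) :
  injective (fun p => f (coprod_fun u v p)).
Proof.
move=> [i x] [j y] /iinj; rewrite /coprod_fun /= => -[<-].
by case: (i == two1) => /minj ->.
Qed.
Definition pre (f : Inj2) (u v : Minj) : Inj2 := IInj2 (@pre_inj f u v).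

Lemma post_inj (u : Minj) (f : Inj2) : injective (fun p => u (f p)).
Proof. move=> x y h; exact: (@iinj f x y (@minj u _ _ h)). Qed.
Definition post (u : Minj) (f : Inj2) : Inj2 := IInj2 (@post_inj u f).

(** n-simplices of E Inj(2 x omega, omega) x X x Y (before quotienting) *)
Definition btriple (X Y : EMsSet) (n : nat) : Type :=
  (('I_n.+1 -> Inj2) * X n * Y n)%type.

(* generating relation of E Inj(2 x omega, omega) x_{EM^2} (X x Y) *)
Definition bal_step (X Y : EMsSet) (n : nat) (t t' : btriple X Y n) : Prop :=
  exists (f : 'I_n.+1 -> Inj2) (u v : 'I_n.+1 -> Minj) (x : X n) (y : Y n),
    t = (f, sact u x, sact v y) /\
    t' = (fun i => pre (f i) (u i) (v i), x, y).

Definition bal_equiv (X Y : EMsSet) (n : nat) : relation (btriple X Y n) :=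
  clos_refl_sym_trans _ (@bal_step X Y n).

Definition bop (X Y : EMsSet) m n (a : Dmap m n) (t : btriple X Y n)
  : btriple X Y m :=
  (fun i => t.1.1 (a i), sop a t.1.2, sop a t.2).

Definition bact (X Y : EMsSet) n (u : 'I_n.+1 -> Minj) (t : btriple X Y n)
  : btriple X Y n :=
  (fun i => post (u i) (t.1.1 i), t.1.2, t.2).

Definition Phi (X Y : EMsSet) n (t : btriple X Y n) : (X n * Y n)%type :=
  (sact (fun i => restr (t.1.1 i) two1) t.1.2,
   sact (fun i => restr (t.1.1 i) two2) t.2).

(* Main.v *)
Require Import Defs.
From Stdlib Require Import Relations.
From mathcomp Require Import all_boot.
From Stdlib Require Import ClassicalEpsilon ProofIrrelevance FunctionalExtensionality.
From mathcomp Require Import zify.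
Set Implicit Arguments. Unset Strict Implicit. Unset Printing Implicit Defensive.


Lemma Minj_ext (u v : Minj) : (forall t, u t = v t) -> u = v.
Proof.
case: u => f hf; case: v => g hg /= H.
have E : f = g by apply: functional_extensionality.
subst g; f_equal; apply: proof_irrelevance.
Qed.

Lemma Inj2_ext (u v : Inj2) : (forall t, u t = v t) -> u = v.
Proof.
case: u => f hf; case: v => g hg /= H.
have E : f = g by apply: functional_extensionality.
subst g; f_equal; apply: proof_irrelevance.
Qed.

Lemma I2_cases (j : 'I_2) : j = two1 \/ j = two2.
Proof. by case: j => [[|[|m]]] H; [left|right|]; try apply: val_inj. Qed.

Lemma inc_inj (M : nat -> nat) : (forall n, M n < M n.+1) -> injective M.
Proof.
move=> H.
have hm : {homo M : i j / i < j} by apply: (homo_ltn ltn_trans H).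
move=> x y E; case: (ltngtP x y) => // /hm; rewrite E ltnn //.
Qed.

Lemma unbounded (P : nat -> nat) : injective P -> forall N, exists j, N < P j.
Proof.
move=> hP N.
case: (pickP (fun j : 'I_N.+2 => N < P j)) => [j Hj | H]; first by exists j.
have Hl : forall j : 'I_N.+2, P j < N.+1 by move=> j; rewrite ltnS leqNgt H.
pose F := fun j : 'I_N.+2 => Ordinal (Hl j).
have Fi : injective F by move=> x y /(congr1 val) /= /hP /val_inj.
by have := leq_card F Fi; rewrite !card_ord ltnn.
Qed.

Section Thin.
Variable M : nat -> nat.
Hypothesis hM : injective M.

Definition ind (s : nat) : option nat :=
  match excluded_middle_informative (exists n, M n = s) with
  | left h => Some (proj1_sig (constructive_indefinite_description _ h))
  | right _ => None end.

Lemma ind_spec s : (exists n, ind s = Some n /\ M n = s) \/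
                   (ind s = None /\ forall n, M n <> s).
Proof.
rewrite /ind; case: excluded_middle_informative => [h|h].
  left; case: constructive_indefinite_description => n Hn /=; by exists n.
by right; split => // n E; apply: h; exists n.
Qed.

Lemma indM n : ind (M n) = Some n.
Proof.
case: (ind_spec (M n)) => [[m [-> /hM ->]] | [_ H]] //.
by case: (H n).
Qed.

Variable g : nat -> nat.
Definition thin (s : nat) : nat :=
  match ind s with Some n => M (g n) | None => s end.

Lemma thin_inj : injective g -> injective thin.
Proof.
move=> hg x y; rewrite /thin.
case: (ind_spec x) => [[n [-> Hn]] | [-> Hx]];
case: (ind_spec y) => [[m [-> Hm]] | [-> Hy]] //.
- by move/hM/hg => E; subst.
- by move=> E; case: (Hy (g n)).
- by move=> E; case: (Hx (g m)).
Qed.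

Lemma thin_fix s : (forall n, M n = s -> g n = n) -> thin s = s.
Proof.
rewrite /thin => H; case: (ind_spec s) => [[n [-> Hn]] | [-> _]] //.
by rewrite H.
Qed.

Lemma thin_miss s m : (forall n, g n <> m) -> thin s <> M m.
Proof.
rewrite /thin => H; case: (ind_spec s) => [[n [-> Hn]] | [-> Hs]].
  by move/hM; apply: H.
by move=> E; apply: (Hs m).
Qed.

Lemma thinM n : thin (M n) = M (g n).
Proof. by rewrite /thin indM. Qed.
End Thin.

Lemma thin_comp M (hM : injective M) g g' s :
  thin M g (thin M g' s) = thin M (fun n => g (g' n)) s.
Proof.
rewrite {2}/thin; case: (@ind_spec M s) => [[n [-> <-]] | [-> Hs]].
  by rewrite !(thinM hM).
by rewrite /thin; case: (@ind_spec M s) => [[n [_ E]] | [-> _]] //; case: (Hs n).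
Qed.

Lemma two_neq : two1 <> two2. Proof. by move/(congr1 val). Qed.

Lemma pre1 (f : Inj2) (u v : Minj) s : pre f u v (two1, s) = f (two1, u s).
Proof. by []. Qed.
Lemma pre2 (f : Inj2) (u v : Minj) s : pre f u v (two2, s) = f (two2, v s).
Proof. by []. Qed.

Section MK2.
Variables a b : nat -> nat.
Hypotheses (ha : injective a) (hb : injective b) (hab : forall s t, a s <> b t).
Lemma mk2_inj : injective (fun pr : 'I_2 * nat => if pr.1 == two1 then a pr.2 else b pr.2).
Proof.
move=> [i s] [j t] /=.
case: (I2_cases i) => ->; case: (I2_cases j) => -> /=.
- by move/ha ->.
- by move/hab.
- by move=> E; case: (hab (esym E)).
- by move/hb ->.
Qed.
Definition mk2 : Inj2 := IInj2 mk2_inj.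
Lemma mk2_1 s : mk2 (two1, s) = a s. Proof. by []. Qed.
Lemma mk2_2 s : mk2 (two2, s) = b s. Proof. by []. Qed.
End MK2.

Definition idx (P : nat -> nat) (hP : injective P) N := xchoose (unbounded hP N).
Lemma idxP P (hP : injective P) N : N < P (idx hP N).
Proof. exact: (xchooseP (unbounded hP N)). Qed.

Section Interleave.
Variables p q : nat -> nat.
Hypotheses (hp : injective p) (hq : injective q).
Fixpoint S n := match n with
  | 0 => idx hp 0
  | n'.+1 => let prev := (if odd n' then q else p) (S n') in
             if odd n' then idx hp prev else idx hq prev end.
Definition Mv n := (if odd n then q else p) (S n).
Lemma Mv_inc n : Mv n < Mv n.+1.
Proof. rewrite /Mv /=; case: (odd n) => /=; apply: idxP. Qed.
Lemma Mv_inj : injective Mv.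
Proof. exact: inc_inj Mv_inc. Qed.
Lemma Mv_even t : Mv (2*t) = p (S (2*t)).
Proof. by rewrite /Mv oddM. Qed.
Lemma Mv_odd t : Mv (2*t).+1 = q (S (2*t).+1).
Proof. by rewrite /Mv /= oddM. Qed.
Lemma a_inj : injective (fun s => S (2*s)).
Proof.
move=> x y E; have : Mv (2*x) = Mv (2*y) by rewrite !Mv_even E.
move/Mv_inj; lia.
Qed.
Lemma a'_inj : injective (fun s => S (2*s).+1).
Proof.
move=> x y E; have : Mv (2*x).+1 = Mv (2*y).+1 by rewrite !Mv_odd E.
move/Mv_inj; lia.
Qed.
End Interleave.

Lemma dbl_inj : injective (fun s => 2*s). Proof. move=> x y; lia. Qed.
Lemma dbl1_inj : injective (fun s => (2*s).+1). Proof. move=> x y; lia. Qed.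
Definition Mdbl : Minj := MInj dbl_inj.
Definition Mdbl1 : Minj := MInj dbl1_inj.

Lemma R1 (X : EMsSet) n (g : 'I_n.+1 -> Inj2) (u v : 'I_n.+1 -> Minj) (z : X n)
  (y y' : Term n) :
  bal_equiv (g, sact u z, y) (fun i => pre (g i) (u i) (v i), z, y').
Proof.
apply: rst_step; exists g, u, v, z, y'; split => //.
by case: y; case: (sact v y').
Qed.

Lemma R0 (X : EMsSet) n (g : 'I_n.+1 -> Inj2) (v : 'I_n.+1 -> Minj) (z : X n)
  (y y' : Term n) :
  bal_equiv (g, z, y) (fun i => pre (g i) Mid (v i), z, y').
Proof. by have := R1 g (fun _ => Mid) v z y y'; rewrite sact_id. Qed.

Lemma ML (X : EMsSet) n (g g' : 'I_n.+1 -> Inj2) (z : X n) (y y' : Term n) :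
  (forall i s, g i (two1, s) = g' i (two1, s)) -> bal_equiv (g, z, y) (g', z, y').
Proof.
move=> H.
pose hp i := @restr_inj (g i) two2. pose hq i := @restr_inj (g' i) two2.
pose a i : Minj := MInj (@a_inj _ _ (hp i) (hq i)).
pose a' i : Minj := MInj (@a'_inj _ _ (hp i) (hq i)).
have disj : forall i s m, g i (two1, s) <> Mv (hp i) (hq i) m.
  move=> i s m; rewrite /Mv; case: (odd m) => /=.
    by rewrite H => /iinj [] E; discriminate.
  by move=> /iinj [] E; discriminate.
pose k i := mk2 (@restr_inj (g i) two1) (@Mv_inj _ _ (hp i) (hq i)) (@disj i).
apply: rst_trans (R0 g a z y tt) _.
have E1 : (fun i => pre (g i) Mid (a i)) = (fun i => pre (k i) Mid Mdbl).
  apply: functional_extensionality => i; apply: Inj2_ext => -[j s].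
  by case: (I2_cases j) => ->; rewrite /= ?/Mv ?oddM.
have E2 : (fun i => pre (g' i) Mid (a' i)) = (fun i => pre (k i) Mid Mdbl1).
  apply: functional_extensionality => i; apply: Inj2_ext => -[j s].
  by case: (I2_cases j) => ->; rewrite ?pre1 ?pre2 /= ?/Mv /= ?oddM /= ?H.
rewrite E1.
apply: rst_trans (rst_sym _ _ _ _ (R0 k (fun _ => Mdbl) z tt tt)) _.
apply: rst_trans (R0 k (fun _ => Mdbl1) z tt tt) _.
rewrite -E2.
exact: rst_sym (R0 g' a' z y' tt).
Qed.

Definition gs n := if odd n then n else 2*n.
Definition gs' n := if odd n then (2*n).+1 else n.

Lemma gs_inj : injective gs.
Proof.
move=> x y; rewrite /gs; have := modn2 x; have := modn2 y.
by case: (odd x); case: (odd y) => /= hy hx; lia.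
Qed.
Lemma gs'_inj : injective gs'.
Proof.
move=> x y; rewrite /gs'; have := modn2 x; have := modn2 y.
by case: (odd x); case: (odd y) => /= hy hx; lia.
Qed.
Lemma gs_comm n : gs (gs' n) = gs' (gs n).
Proof.
rewrite /gs /gs'; case: (boolP (odd n)) => h /=; rewrite ?h ?oddM //=.
by rewrite (negbTE h).
Qed.
Lemma gs_miss s n : gs n <> 4*s+2.
Proof. rewrite /gs; have := modn2 n; case: (odd n) => /= h; lia. Qed.
Lemma gs'_miss s n : gs' n <> 4*s+1.
Proof. rewrite /gs'; have := modn2 n; case: (odd n) => /= h; lia. Qed.

Lemma sact_fixF (X : EMsSet) n (F S : 'I_n.+1 -> Minj) (x : X n) :
  (forall i t, S i (F i t) = F i t) -> sact S (sact F x) = sact F x.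
Proof.
move=> H; rewrite -sact_comp; congr sact; apply: functional_extensionality => i.
by apply: Minj_ext => t /=.
Qed.

Lemma LA (X : EMsSet) n (f H : 'I_n.+1 -> Inj2) (x : X n) (y y' : Term n) :
  (forall i s, H i (two1, f i (two1, s)) = f i (two1, s)) ->
  bal_equiv (f, x, y) (H, sact (fun i => restr (f i) two1) x, y').
Proof.
move=> Hf.
apply: rst_sym; apply: rst_trans (R1 H (fun i => restr (f i) two1) (fun _ => Mid) x y' tt) _.
by apply: ML => i s; rewrite pre1 /= Hf.
Qed.

Lemma LB (X : EMsSet) n (H : 'I_n.+1 -> Inj2) (S : 'I_n.+1 -> Minj) (z : X n)
  (y y' : Term n) : sact S z = z ->
  bal_equiv (H, z, y) (fun i => pre (H i) (S i) Mid, z, y').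
Proof. move=> E; have := R1 H S (fun _ => Mid) z y y'; by rewrite E. Qed.

Lemma part4 (X : EMsSet) n (f f' : 'I_n.+1 -> Inj2) (x x' : X n) (y y' : Term n) :
  sact (fun i => restr (f i) two1) x = sact (fun i => restr (f' i) two1) x' ->
  bal_equiv (f, x, y) (f', x', y').
Proof.
move=> E.
pose hp i := @restr_inj (f i) two2. pose hq i := @restr_inj (f' i) two2.
pose M i := Mv (hp i) (hq i).
have hM : forall i, injective (M i) by move=> i; exact: Mv_inj.
pose Sg i : Minj := MInj (thin_inj (hM i) gs_inj).
pose Sg' i : Minj := MInj (thin_inj (hM i) gs'_inj).
have r1 : forall i, injective (fun s => M i (4*s+2)) by move=> i a b /hM; lia.
have r2 : forall i, injective (fun s => M i (4*s+1)) by move=> i a b /hM; lia.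
have d1 : forall i s t, Sg i s <> M i (4*t+2).
  by move=> i s t; apply: thin_miss => // m; apply: gs_miss.
have d2 : forall i s t, Sg' i s <> M i (4*t+1).
  by move=> i s t; apply: thin_miss => // m; apply: gs'_miss.
pose H i := mk2 (@minj (Sg i)) (r1 i) (d1 i).
pose H' i := mk2 (@minj (Sg' i)) (r2 i) (d2 i).
have fix1 : forall i s, Sg i (f i (two1, s)) = f i (two1, s).
  move=> i s /=; apply: thin_fix => m; rewrite /M /Mv /gs.
  case: (odd m) => //= /iinj [] e; discriminate.
have fix2 : forall i s, Sg' i (f' i (two1, s)) = f' i (two1, s).
  move=> i s /=; apply: thin_fix => m; rewrite /M /Mv /gs'.
  case: (odd m) => //= /iinj [] e; discriminate.
apply: rst_trans (@LA _ _ f H x y tt fix1) _.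
set yy := sact _ x.
have e1 : sact Sg' yy = yy by rewrite /yy E; apply: sact_fixF.
have e2 : sact Sg yy = yy by rewrite /yy; apply: sact_fixF.
apply: rst_trans (LB H tt tt e1) _.
apply: (@rst_trans _ _ _ ((fun i => pre (H' i) (Sg i) Mid, yy, tt) : btriple X Term n)).
  apply: ML => i s; rewrite !pre1 /=.
  by rewrite !(thin_comp (hM i)); congr thin; apply: functional_extensionality => m; rewrite gs_comm.
apply: rst_trans (rst_sym _ _ _ _ (LB H' tt tt e2)) _.
rewrite /yy E; apply: rst_sym; apply: (@LA _ _ f' H') => i s; exact: fix2.
Qed.

Lemma sact_fix_all (X : EMsSet) n (x : X n) (u : 'I_n.+1 -> Minj) :
  (forall k, sact (ik k (u k)) x = x) -> sact u x = x.
Proof.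
move=> H.
pose P m := fun i : 'I_n.+1 => if i < m then u i else Mid.
have HP : forall m, sact (P m) x = x.
  elim => [|m IH].
    have -> : P 0 = fun _ => Mid by apply: functional_extensionality.
    exact: sact_id.
  case: (ltnP m n.+1) => hm.
    pose km := Ordinal hm.
    have -> : P m.+1 = fun i => Mcomp (ik km (u km) i) (P m i).
      apply: functional_extensionality => i; apply: Minj_ext => t.
      rewrite /P /ik ltnS leq_eqVlt.
      case: (eqVneq i km) => [->|ne] /=; first by rewrite eqxx ltnn.
      have -> : (nat_of_ord i == m) = false.
        by apply/negbTE; apply: contra ne => /eqP e; apply/eqP/val_inj.
      by [].
    by rewrite sact_comp IH H.
  have -> : P m.+1 = P m; last exact: IH.
  apply: functional_extensionality => i; rewrite /P.
  have h1 : i < m by apply: leq_trans (ltn_ord i) hm.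
  by rewrite h1 ltnS (ltnW h1).
have -> : u = P n.+1; last exact: HP.
by apply: functional_extensionality => i; rewrite /P ltn_ord.
Qed.

Fixpoint dseq (A : nat -> Prop) (hA : coinfinite A) n : nat :=
  match n with
  | 0 => proj1_sig (constructive_indefinite_description _ (hA 0))
  | n'.+1 => proj1_sig (constructive_indefinite_description _ (hA (dseq hA n').+1))
  end.

Lemma dseq_spec (A : nat -> Prop) (hA : coinfinite A) n :
  ~ A (dseq hA n) /\ dseq hA n < dseq hA n.+1.
Proof.
split.
  case: n => [|n] /=; case: constructive_indefinite_description => t [] //.
by rewrite /=; case: constructive_indefinite_description => t [].
Qed.

Lemma part5a (X : EMsSet) n (x : X n) :
  in_mu x -> exists t : btriple X Term n, Phi t = (x, tt).
Proof.
move=> H.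
pose A k := proj1_sig (constructive_indefinite_description _ (H k)).
have hA : forall k, coinfinite (A k) /\ k_supported k (A k) x.
  by move=> k; rewrite /A; case: constructive_indefinite_description.
pose d k := dseq (proj1 (hA k)).
have hd : forall k, injective (d k).
  by move=> k; apply: inc_inj => m; case: (dseq_spec (proj1 (hA k)) m).
have r : forall k, injective (fun s => d k (2*s).+1) by move=> k a b /hd; lia.
have dj : forall k s t, thin (d k) (fun m => 2*m) s <> d k (2*t).+1.
  move=> k s t; apply: thin_miss => // m; lia.
pose f k := mk2 (thin_inj (hd k) dbl_inj) (r k) (dj k).
exists (f, x, tt); rewrite /Phi /=; congr pair.
apply: sact_fix_all => k; apply: (proj2 (hA k)) => a Ha /=.
apply: thin_fix => m E; exfalso.
by case: (dseq_spec (proj1 (hA k)) m) => /(_ _) nA _; apply: nA; rewrite -/(d k) E.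
Qed.

Lemma part5b (X : EMsSet) n (x : X n) :
  (exists t : btriple X Term n, Phi t = (x, tt)) -> in_mu x.
Proof.
case=> [[[f z] w]] /(congr1 fst) /= <- k.
exists (fun a => exists s, f k (two1, s) = a); split.
  move=> N; case: (unbounded (@restr_inj (f k) two2) N) => j hj.
  exists (f k (two2, j)); split; first exact: ltnW.
  by case=> s /iinj [] e; discriminate.
move=> u hu; rewrite -sact_comp; congr sact.
apply: functional_extensionality => i; apply: Minj_ext => t /=.
rewrite /ik; case: eqP => [->|] //=.
by rewrite hu //; exists t.
Qed.

Theorem proposition2p29 (X : EMsSet) :
  (forall n (t t' : btriple X Term n),
      bal_equiv t t' -> Phi t = Phi t') /\
  (forall m n (a : Dmap m n) (t : btriple X Term n),
      Phi (bop a t) = (sop a (Phi t).1, sop a (Phi t).2)) /\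
  (forall n (u : 'I_n.+1 -> Minj) (t : btriple X Term n),
      Phi (bact u t) = (sact u (Phi t).1, sact u (Phi t).2)) /\
  (forall n (t t' : btriple X Term n),
      Phi t = Phi t' -> bal_equiv t t') /\
  (forall n (x : X n),
      in_mu x <-> exists t : btriple X Term n, Phi t = (x, tt)).
Proof.
split.
  move=> n t t'; elim => {t t'}.
  - move=> t t'; rewrite /bal_step => -[g [u [v [z [w [-> ->]]]]]].
    rewrite /Phi /=; congr pair; rewrite -sact_comp; congr sact.
    by apply: functional_extensionality => i; apply: Minj_ext.
  - by [].
  - by move=> t t' _ ->.
  - by move=> t1 t2 t3 _ -> _ ->.
split.
  move=> m n a [[f z] w]; rewrite /Phi /bop /=; congr pair; first by rewrite sop_act.
split.
  move=> n u [[f z] w]; rewrite /Phi /bact /=; congr pair; rewrite -sact_comp.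
  by congr sact; apply: functional_extensionality => i; apply: Minj_ext.
split.
  move=> n [[f x] y] [[f' x'] y'] /(congr1 fst) /= E.
  exact: part4.
move=> n x; split; [exact: part5a | exact: part5b].
Qed.
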